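(* Let $K$ be a totally real number field of degree $n$. Suppose an integer plane $A\subseteq\mathbb{R}^n$ is contained in the hyperplane $\{x\in\mathbb{R}^n:\sum_{i=1}^n\tau_i(\delta)x_i=k\}$ for some $\delta\in\mathcal{O}_K^\vee$ and some $k>0$. Then $\mathrm{ID}(A)$ is a divisor of $k$. In particular, if $A$ is contained in such a hyperplane with $k=1$, then $\mathrm{ID}(A)=1$.
   Context: $\tau_1,\dots,\tau_n$ are the real embeddings of $K$; the Minkowski embedding is $\iota_M:K\to\mathbb{R}^n$, $\alpha\mapsto(\tau_1(\alpha),\dots,\tau_n(\alpha))$, and $\Lambda=\iota_M(\mathcal{O}_K)$. The codifferent is $\mathcal{O}_K^\vee=\{\delta\in K:\operatorname{Tr}_{K/\mathbb{Q}}(\delta\alpha)\in\mathbb{Z}\ \forall\alpha\in\mathcal{O}_K\}$. An integer plane is an affine subspace $A\subseteq\mathbb{R}^n$ such that $A\cap\Lambda$ spans (affinely) a lattice of rank equal to $\dim A$. For an integer plane $A$ not containing the origin, its integer distance $\mathrm{ID}(A)$ is the index of the subgroup generated by $A\cap\Lambda$ in the lattice $\Lambda\cap\operatorname{Span}_{\mathbb{R}}(A)$. *)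

(* Defs.v *)
From HB Require Import structures.
From mathcomp Require Import all_boot all_order all_algebra all_field.
From mathcomp Require Import reals.
Set Implicit Arguments. Unset Strict Implicit. Unset Printing Implicit Defensive.
Import Order.TTheory GRing.Theory Num.Theory.
Local Open Scope ring_scope.

Section Defs.
Variable K : fieldExtType rat.

Definition trKQ (x : K) : rat :=
  \tr (passmx.mxof (vbasis fullv) (vbasis fullv) (amulr x)).

Definition ring_of_integers (x : K) : Prop :=
  exists p : {poly int}, p \is monic /\ root (map_poly (intr : int -> K) p) x.

Definition codifferent (d : K) : Prop :=
  forall a : K, ring_of_integers a -> trKQ (d * a) \is a Num.int.

Variable R : realType.
Variable n : nat.
Variable tau : 'I_n -> {rmorphism K -> R}.

Definition minkowski (a : K) : 'rV[R]_n := \row_i tau i a.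

Definition Lambda (x : 'rV[R]_n) : Prop :=
  exists a : K, ring_of_integers a /\ x = minkowski a.
End Defs.

Section Geom.
Variables (R : realType) (n : nat).
Implicit Types (S A L G : 'rV[R]_n -> Prop).

Definition affine_subspace_dir A (p : 'rV[R]_n) (V : 'M[R]_n) : Prop :=
  forall x, A x <-> (x - p <= V)%MS.

Definition lin_span S (x : 'rV[R]_n) : Prop :=
  exists m (c : 'I_m -> R) (y : 'I_m -> 'rV[R]_n),
    (forall j, S (y j)) /\ x = \sum_j c j *: y j.

Definition gen_subgroup S (x : 'rV[R]_n) : Prop :=
  exists m (c : 'I_m -> int) (y : 'I_m -> 'rV[R]_n),
    (forall j, S (y j)) /\ x = \sum_j y j *~ c j.

Definition gen_diff_subgroup S (x : 'rV[R]_n) : Prop :=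
  exists m (c : 'I_m -> int) (y z : 'I_m -> 'rV[R]_n),
    (forall j, S (y j) /\ S (z j)) /\ x = \sum_j (y j - z j) *~ c j.

(* G is a subgroup of L and the index [L : G] equals m: there are m
   representatives of pairwise distinct cosets covering L. *)
Definition has_index L G (m : nat) : Prop :=
  (forall x, G x -> L x) /\
  exists r : 'I_m -> 'rV[R]_n,
    (forall i, L (r i)) /\
    (forall i j, G (r i - r j) -> i = j) /\
    (forall x, L x -> exists i, G (x - r i)).

(* Integer plane w.r.t. the lattice Lam: A is an affine subspace with
   direction V such that A ∩ Lam affinely spans a lattice of rank dim A
   = \rank V, i.e. the group of differences of points of A ∩ Lam
   (a subgroup of the lattice Lam - Lam, hence discrete) has real rank
   \rank V: its real span is V. *)
Definition integer_plane (Lam : 'rV[R]_n -> Prop) A : Prop :=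
  exists (p : 'rV[R]_n) (V : 'M[R]_n),
    affine_subspace_dir A p V /\
    (exists x0, A x0 /\ Lam x0) /\
    (forall v, (v <= V)%MS <->
       lin_span (gen_diff_subgroup (fun x => A x /\ Lam x)) v).

Definition integer_distance (Lam : 'rV[R]_n -> Prop) A (m : nat) : Prop :=
  has_index (fun x => Lam x /\ lin_span A x)
            (gen_subgroup (fun x => A x /\ Lam x)) m.
End Geom.

(* Main.v *)
Require Import Defs.
From HB Require Import structures.
From mathcomp Require Import all_boot all_order all_algebra all_field.
From mathcomp Require Import reals.
From Stdlib Require Import Classical.
From mathcomp Require Import boolp zify ring lra.
Import Order.TTheory GRing.Theory Num.Theory.
Local Open Scope ring_scope.
Lemma small_diff (m a b : nat) (s : int) :
  (a < m)%N -> (b < m)%N -> a%:Z - b%:Z = m%:Z * s -> a = b.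
Proof.
move=> ha hb h.
have [s0|sn] := eqVneq s 0; first by move: h; rewrite s0 mulr0; lia.
have : (m <= `|a%:Z - b%:Z|)%N.
  by rewrite h abszM /= -{1}(muln1 m) leq_mul2l absz_gt0 sn orbT.
lia.
Qed.
Section Alg.
Variables (K : fieldExtType rat) (R : realType) (n : nat).
Variable tau : 'I_n -> {rmorphism K -> R}.
Hypothesis tau_inj : forall i j : 'I_n, (forall a : K, tau i a = tau j a) -> i = j.

Lemma tau_neq (x y : 'I_n) : y != x -> exists a, tau y a != tau x a.
Proof.
move=> nyx; apply: NNPP => H; move/eqP: nyx; apply; apply: tau_inj => a.
apply: NNPP => Hn; apply: H; exists a; exact/eqP.
Qed.

Lemma dedekind_contra (P : pred 'I_n) (c_ : 'I_n -> R) x :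
    P x -> c_ x != 0 ->
  exists a, \sum_(y | P y) c_ y * tau y a != 0.
Proof.
have [m] := ubnP #|P|; elim: m c_ x P => // m IHn c_ x P lePn Px nz_cx.
rewrite ltnS (cardD1x Px) in lePn; move/IHn: lePn => {m IHn}/=IH_P.
have [/eqfun_inP c_Px'_0 | ] := boolP [forall (y | P y && (y != x)), c_ y == 0].
  exists 1; rewrite (bigD1 x Px) /= rmorph1 mulr1.
  by rewrite big1 ?addr0 // => y /c_Px'_0->; rewrite mul0r.
case/forall_inPn => y Px'y nz_cy.
have [Py nyx] := andP Px'y.
have [a nz_yxa] := @tau_neq x y nyx.
pose d_ y := c_ y * (tau y a - tau x a).
have /IH_P[//|b nz_sumb]: d_ y != 0 by rewrite mulf_neq0 // subr_eq0.
have [sumb_0|] := eqVneq (\sum_(z | P z) c_ z * tau z b) 0; last by exists b.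
exists (a * b).
rewrite -subr_eq0 -[z in _ - z](mulr0 (tau x a)) -[in z in _ - z]sumb_0.
rewrite mulr_sumr -sumrB (bigD1 x Px) rmorphM /= mulrCA subrr add0r.
congr (_ != 0): nz_sumb; apply: eq_bigr => z _.
by rewrite mulrCA rmorphM -mulrBr -mulrBl mulrA.
Qed.

Lemma dedekind (c_ : 'I_n -> R) :
  (forall a, \sum_y c_ y * tau y a = 0) -> forall x, c_ x = 0.
Proof.
move=> H x; apply/eqP/negP => /negP nz; have [a] := @dedekind_contra predT c_ x (erefl _) nz.
by rewrite H eqxx.
Qed.

End Alg.

Lemma tau_scale (K : fieldExtType rat) (R : realType) (t : {rmorphism K -> R}) q y :
  t (q *: y) = ratr q * t y.
Proof.
rewrite -mulr_algl rmorphM; congr (_ * _).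
exact: (fmorph_eq_rat (t \o in_alg K) q).
Qed.
Lemma trace_sum (K : fieldExtType rat) (R : realType)
  (tau : 'I_(\dim {:K}) -> {rmorphism K -> R})
  (tau_inj : forall i j, (forall a : K, tau i a = tau j a) -> i = j) (x : K) :
  \sum_i tau i x = ratr (trKQ x).
Proof.
set d := \dim {:K}.
pose e := vbasis (fullv : {vspace K}).
pose Mx := passmx.mxof e e (amulr x).
pose P : 'M[R]_d := \matrix_(i, k) tau k e`_i.
pose D : 'M[R]_d := diag_mx (\row_k tau k x).
have expand k (a : K) : tau k a = \sum_j ratr (coord e j a) * tau k e`_j.
  rewrite {1}(coord_vbasis (memvf a)) rmorph_sum; apply: eq_bigr => j _.
  by rewrite tau_scale.
have MxE i j : Mx i j = coord e j (e`_i * x).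
  rewrite /Mx /passmx.mxof !mxE /= passmx.vecof_delta !lfunE /= ?comp_lfunE ?lfunE /=.
  by [].
have C1 : map_mx ratr Mx *m P = P *m D.
  apply/matrixP => i k; rewrite [RHS]mxE (bigD1 k) //= big1 ?addr0; last first.
    by move=> j /negbTE njk; rewrite [D _ _]mxE njk mulr0n mulr0.
  rewrite !mxE eqxx mulr1n -rmorphM expand; apply: eq_bigr => j _.
  by rewrite !mxE /= passmx.vecof_delta !lfunE.
have C2 : P \in unitmx.
  rewrite -unitmx_tr -row_free_unit; apply: contraT => nf.
  have : kermx P^T != 0 by rewrite kermx_eq0.
  case/matrix0Pn => i0 [k0 nz].
  set w := row i0 (kermx P^T).
  have w0 : w *m P^T = 0 by rewrite /w -row_mul mulmx_ker row0.
  have : w 0 k0 = 0.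
    apply: (@dedekind K R d tau tau_inj (fun k => w 0 k)) => a.
    rewrite (eq_bigr (fun k => \sum_j ratr (coord e j a) * (w 0 k * tau k e`_j))); last first.
      by move=> k _; rewrite expand mulr_sumr; apply: eq_bigr => j _; rewrite mulrCA.
    rewrite exchange_big /= big1 // => j _; rewrite -mulr_sumr.
    have h := congr1 (fun M : 'M[R]_(1,d) => M 0 j) w0; rewrite /= [RHS]mxE in h.
    rewrite -[RHS](mulr0 (ratr (coord e j a))) -[in RHS]h mxE; f_equal.
    by apply: eq_bigr => k _; rewrite !mxE.
  by rewrite /w mxE => h; move: nz; rewrite h eqxx.
have -> : trKQ x = \tr Mx by [].
rewrite -trace_map_mx.
have -> : map_mx ratr Mx = P *m D *m invmx P.
  by rewrite -C1 mulmxK.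
rewrite mxtrace_mulC mulmxA mulVmx // mul1mx mxtrace_diag.
by apply: eq_bigr => k _; rewrite mxE.
Qed.
Section LS.
Variables (R : realType) (n : nat).

Lemma LS_of (S : 'rV[R]_n -> Prop) x : S x -> lin_span S x.
Proof.
move=> Sx; exists 1%N, (fun _ => 1), (fun _ => x); split => //.
by rewrite big_ord1 scale1r.
Qed.

Lemma LS_Z (S : 'rV[R]_n -> Prop) c x : lin_span S x -> lin_span S (c *: x).
Proof.
move=> [m [cc [y [Hy ->]]]]; exists m, (fun j => c * cc j), y; split => //.
by rewrite scaler_sumr; apply: eq_bigr => j _; rewrite scalerA.
Qed.

Lemma LS_D (S : 'rV[R]_n -> Prop) x y :
  lin_span S x -> lin_span S y -> lin_span S (x + y).
Proof.
move=> [m1 [c1 [y1 [H1 ->]]]] [m2 [c2 [y2 [H2 ->]]]].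
exists (m1 + m2)%N,
  (fun j => match split j with inl a => c1 a | inr b => c2 b end),
  (fun j => match split j with inl a => y1 a | inr b => y2 b end).
split; first by move=> j; case: (split j).
rewrite big_split_ord /=; congr (_ + _); apply: eq_bigr => j _.
  by rewrite (unsplitK (inl j)).
by rewrite (unsplitK (inr j)).
Qed.

Lemma LS_B (S : 'rV[R]_n -> Prop) x y :
  lin_span S x -> lin_span S y -> lin_span S (x - y).
Proof. by move=> Hx Hy; apply: LS_D => //; rewrite -scaleN1r; apply: LS_Z. Qed.

Lemma LS_Mz (S : 'rV[R]_n -> Prop) x (c : int) : lin_span S x -> lin_span S (x *~ c).
Proof. by rewrite -scaler_int; apply: LS_Z. Qed.
End LS.
Section Geo.
Variables (R : realType) (n : nat) (Lam : 'rV[R]_n -> Prop) (w : 'I_n -> R).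
Hypothesis Lam0 : Lam 0.
Hypothesis LamB : forall x y, Lam x -> Lam y -> Lam (x - y).
Hypothesis LamI : forall x, Lam x -> exists z : int, \sum_i w i * x 0 i = z%:~R.

Definition fw (x : 'rV[R]_n) := \sum_i w i * x 0 i.

Lemma fD x y : fw (x + y) = fw x + fw y.
Proof. by rewrite /fw -big_split; apply: eq_bigr => i _; rewrite mxE mulrDr. Qed.
Lemma f0 : fw 0 = 0.
Proof. by rewrite /fw big1 // => i _; rewrite mxE mulr0. Qed.
Lemma fZ c x : fw (c *: x) = c * fw x.
Proof. by rewrite /fw mulr_sumr; apply: eq_bigr => i _; rewrite mxE mulrCA. Qed.
Lemma fN x : fw (- x) = - fw x.
Proof. by rewrite -scaleN1r fZ mulN1r. Qed.
Lemma fB x y : fw (x - y) = fw x - fw y.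
Proof. by rewrite fD fN. Qed.
Lemma fMz x c : fw (x *~ c) = fw x *~ c.
Proof. by rewrite -scaler_int fZ mulrzl. Qed.
Lemma fsum m (F : 'I_m -> 'rV[R]_n) : fw (\sum_j F j) = \sum_j fw (F j).
Proof. exact: (big_morph fw fD f0). Qed.

Lemma LamN x : Lam x -> Lam (- x).
Proof. by move=> Lx; rewrite -sub0r; apply: LamB. Qed.
Lemma LamD x y : Lam x -> Lam y -> Lam (x + y).
Proof. by move=> Lx Ly; rewrite -(opprK y); apply: LamB => //; apply: LamN. Qed.
Lemma LamMz x (c : int) : Lam x -> Lam (x *~ c).
Proof.
move=> Lx; have Hn (k : nat) : Lam (x *+ k).
  by elim: k => [|k IH]; rewrite ?mulr0n // mulrS; apply: LamD.
case: c => k; first exact: Hn.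
by rewrite NegzE mulrNz; apply: LamN; apply: Hn.
Qed.


Lemma geo_main (A : 'rV[R]_n -> Prop) (k : R) :
  integer_plane Lam A -> 0 < k -> (forall x, A x -> fw x = k) ->
  exists m d : nat, integer_distance Lam A m /\ k = m%:R * d%:R.
Proof.
move=> [p [V [hdir [[x0 [Ax0 Lamx0]] _]]]] hk hcont.
pose L x := Lam x /\ lin_span A x.
have LB x y : L x -> L y -> L (x - y).
  by move=> [? ?] [? ?]; split; [apply: LamB | apply: LS_B].
have LMz x (c : int) : L x -> L (x *~ c).
  by move=> [? ?]; split; [apply: LamMz | apply: LS_Mz].
have Lx0 : L x0 by split => //; apply: LS_of.
have fx0 : fw x0 = k by apply: hcont.
have [K0 [kK0 K0pos]] : exists K0 : nat, k = K0%:R /\ (0 < K0)%N.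
  have [z fz] := @LamI x0 Lamx0; rewrite -/(fw x0) fx0 in fz.
  move: hk; rewrite fz; case: z fz => [K0|K0] fz hk.
    by exists K0; split => //; move: hk; rewrite ltr0n.
  by move: hk; rewrite NegzE mulrNz oppr_gt0 ltrz0.
pose Pd (j : nat) := (0 < j)%N && `[< exists x, L x /\ fw x = j%:R >].
have exPd : exists j, Pd j.
  by exists K0; rewrite /Pd K0pos; apply/asboolP; exists x0; rewrite fx0.
case: (ex_minnP exPd) => d /andP [d0 /asboolP [xd [Lxd fxd]]] dmin.
have Lmult x : L x -> exists t : int, fw x = t%:~R * d%:R.
  move=> Lx; have [z fz] := @LamI x (proj1 Lx); rewrite -/(fw x) in fz.
  have dnz : (d%:Z != 0) by rewrite eqz_nat -lt0n.
  have r0 : 0 <= (z %% d)%Z by apply: modz_ge0.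
  have rd : (z %% d)%Z < d by apply: ltz_pmod; rewrite ltz_nat.
  have fy : fw (x - xd *~ (z %/ d)%Z) = (z %% d)%Z%:~R.
    rewrite fB fMz fz fxd.
    have -> : d%:R *~ (z %/ d)%Z = ((z %/ d)%Z * d)%:~R :> R by rewrite intrM mulrzl.
    by rewrite -intrB; congr (_%:~R).
  have [r00|rpos] := eqVneq (z %% d)%Z 0.
    by exists (z %/ d)%Z; rewrite fz {1}(divz_eq z d) r00 addr0 intrM.
  have [rn rnE] : exists rn : nat, (z %% d)%Z = rn%:Z.
    by exists `|(z %% d)%Z|%N; rewrite gez0_abs.
  have : (d <= rn)%N.
    apply: dmin; rewrite /Pd; apply/andP; split.
      by move: rpos; rewrite rnE; case: rn {rnE}.
    by apply/asboolP; exists (x - xd *~ (z %/ d)%Z); split;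
      [apply: LB => //; apply: LMz | rewrite fy rnE].
  by move: rd; rewrite rnE ltz_nat; lia.
have [t0 ft0] := Lmult x0 Lx0.
have h0 : K0%:Z = t0 * d%:Z.
  apply: (@intr_inj R); rewrite intrM -ft0 fx0 kK0; by [].
have [m [t0E m0]] : exists m : nat, t0 = m%:Z /\ (0 < m)%N.
  have t0pos : 0 < t0 by clear -h0 K0pos d0; nia.
  exists `|t0|%N; rewrite gez0_abs ?ltW //; split => //.
  by rewrite -ltz_nat gez0_abs ?ltW.
subst t0.
have KE : K0 = (m * d)%N by apply/eqP; rewrite -eqz_nat h0.
have fG x : gen_subgroup (fun x => A x /\ Lam x) x -> exists s : int, fw x = k * s%:~R.
  move=> [mm [c [y [Hy ->]]]]; exists (\sum_j c j).
  rewrite fsum (eq_bigr (fun j => k *~ c j)); last first.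
    by move=> j _; rewrite fMz hcont //; case: (Hy j).
  by rewrite mulrzr mulrz_sumr.
have V0 x : lin_span A x -> fw x = 0 -> (x <= V)%MS.
  move=> [mm [c [y [Hy ->]]]] f0'.
  have sc : \sum_j c j = 0.
    move: f0'; rewrite fsum (eq_bigr (fun j => c j * k)); last first.
      by move=> j _; rewrite fZ hcont.
    by rewrite -mulr_suml => /eqP; rewrite mulf_eq0 (gt_eqF hk) orbF => /eqP.
  have -> : \sum_j c j *: y j = \sum_j c j *: (y j - p).
    rewrite [RHS](eq_bigr (fun j => c j *: y j - c j *: p)); last first.
      by move=> j _; rewrite scalerBr.
    by rewrite sumrB -scaler_suml sc scale0r subr0.
  by apply: summx_sub => j _; apply: scalemx_sub; apply/(hdir _).1.
have Lr (i : nat) : L (i%:R *: xd).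
  by rewrite (scaler_int (Posz i)); apply: LMz.
exists m, d; split; last by rewrite kK0 KE natrM.
split.
  move=> x [mm [c [y [Hy ->]]]]; split.
    apply: (big_ind Lam) => //; first exact: LamD.
    by move=> j _; apply: LamMz; case: (Hy j).
  exists mm, (fun j => (c j)%:~R), y; split; first by move=> j; case: (Hy j).
  by apply: eq_bigr => j _; rewrite scaler_int.
exists (fun i : 'I_m => (i : nat)%:R *: xd); split; first by move=> i; apply: Lr.
split.
  move=> i j /fG [s]; rewrite fB !fZ fxd kK0 KE natrM => h.
  have h2 : ((i%:Z - j%:Z) * d%:Z)%:~R = ((m%:Z * d%:Z) * s)%:~R :> R.
    rewrite !intrM intrB mulrBl; exact: h.
  move/intr_inj: h2 => h2; apply: val_inj => /=.
  have h3 : i%:Z - j%:Z = m%:Z * s.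
    by apply: (@mulIf _ d%:Z); [rewrite eqz_nat -lt0n | rewrite h2 mulrAC].
  exact: small_diff (ltn_ord i) (ltn_ord j) h3.
move=> x Lx; have [t ft] := Lmult x Lx.
have [iN iE] : exists iN : nat, (t %% m)%Z = iN%:Z.
  by exists `|(t %% m)%Z|%N; rewrite gez0_abs // modz_ge0 // eqz_nat -lt0n.
have iNm : (iN < m)%N.
  by rewrite -ltz_nat -iE ltz_pmod // ltz_nat.
exists (Ordinal iNm) => /=.
set q := (t %/ m)%Z.
set y := x - iN%:R *: xd.
have Ly : L y by apply: LB.
set wv := y - x0 *~ q.
have Lw : L wv by apply: LB => //; apply: LMz.
have fw0 : fw wv = 0.
  rewrite /wv /y !fB fZ fMz ft fxd fx0 kK0 KE natrM -mulrzr.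
  rewrite {1}(divz_eq t m) iE intrD intrM /= -[_ *~ q]mulrzr /q.
  ring.
have Vw := V0 wv (proj2 Lw) fw0.
have Aw : A (x0 + wv).
  apply/(hdir _).2; rewrite addrAC; apply: addmx_sub => //.
  exact: (hdir _).1 Ax0.
have Lamw : Lam (x0 + wv) by apply: LamD => //; case: Lw.
exists 2%N, (fun j : 'I_2 => if (j : nat) == 0%N then 1 else q - 1),
  (fun j : 'I_2 => if (j : nat) == 0%N then x0 + wv else x0); split.
  by move=> j; case: ifP.
rewrite !big_ord_recl big_ord0 /= mulr1z mulrzBr mulr1z addr0 /wv.
by apply: esym; rewrite [x0 + _]addrC -addrA [x0 + (_ - x0)]addrC subrK subrK.
Qed.
End Geo.
Lemma roiE (K : fieldExtType rat) (a : K) :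
  ring_of_integers a <-> integralOver (intr : {rmorphism int -> K}) a.
Proof. by split; [move=> [p [hp hr]]; exists p | move=> [p hp hr]; exists p]. Qed.

Theorem corollary2p2 (K : fieldExtType rat) (n : nat)
  (R : realType) (tau : 'I_n -> {rmorphism K -> R})
  (dimK : \dim {:K} = n)
  (tau_inj : forall i j : 'I_n, (forall a : K, tau i a = tau j a) -> i = j)
  (A : 'rV[R]_n -> Prop)
  (hA : integer_plane (Lambda tau) A)
  (delta : K) (hdelta : codifferent delta) (k : R) (hk : 0 < k)
  (hcont : forall x, A x -> \sum_i tau i delta * x 0 i = k) :
  (exists m : nat,
     integer_distance (Lambda tau) A m /\ exists q : int, k = m%:R * q%:~R) /\
  (k = 1 -> integer_distance (Lambda tau) A 1).
Proof.
subst n.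
have Lam0 : Lambda tau 0.
  exists 0; split; last by apply/rowP => i; rewrite !mxE rmorph0.
  by apply/roiE; apply: integral0.
have LamB x y : Lambda tau x -> Lambda tau y -> Lambda tau (x - y).
  move=> [a [ha ->]] [b [hb ->]]; exists (a - b); split.
    by apply/roiE; apply: integral_sub; apply/roiE.
  by apply/rowP => i; rewrite !mxE rmorphB.
have LamI x : Lambda tau x -> exists z : int, \sum_i tau i delta * x 0 i = z%:~R.
  move=> [a [ha ->]].
  have /intrP [z hz] := hdelta a ha.
  exists z; rewrite (eq_bigr (fun i => tau i (delta * a))); last first.
    by move=> i _; rewrite mxE rmorphM.
  by rewrite trace_sum // hz ratr_int.
have [m [d [hID hkmd]]] := @geo_main R _ (Lambda tau) (fun i => tau i delta) Lam0 LamB LamI A k hA hk hcont.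
split.
  by exists m; split => //; exists (Posz d).
move=> k1; move: hkmd; rewrite k1 -natrM => /esym/eqP; rewrite pnatr_eq1.
by rewrite muln_eq1 => /andP [/eqP m1 _]; rewrite -m1.
Qed.
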